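(* There is a constant $C_0>0$ depending only on $\widetilde\mu$ such that the following holds. Let $\varepsilon\in(0,1)$ and let $\omega\in\Omega$ be such that there is $\widetilde n_0$ with $$\Big|L(E)-\frac1{n^2}\sum_{s=0}^{n^2-1}F_n(T^{\zeta_0+sn}\omega,E)\Big|<\varepsilon$$ for all $n,\zeta_0\in\mathbb Z$ with $n\ge\max(\widetilde n_0,(\log(|\zeta_0|+1))^{2/3})$ and all $E\in\hat\Sigma$. Then there exists $\widetilde n_1=\widetilde n_1(\omega,\varepsilon)$ such that: (1) for all $E\in\hat\Sigma$ and all $n,\zeta_0\in\mathbb Z$ with $n\ge\max(\widetilde n_1,\log^2(|\zeta_0|+1))$, $$\frac1n\log\|M_n^E(T^{\zeta_0}\omega)\|\le L(E)+2\varepsilon;$$ (2) for all $n,\zeta_0\in\mathbb Z$ with $n\ge\varepsilon^{-1}\max(\widetilde n_1,2\log^2(|\zeta_0|+1))$, all $E\in\hat\Sigma\setminus\sigma(H_{T^{\zeta_0}\omega,n})$ and all $j,k\in[0,n)$, $$|G^E_{T^{\zeta_0}\omega,n}(j,k)|\le\frac{\exp\big[(n-|j-k|)L(E)+C_0\varepsilon n\big]}{|\det[H_{T^{\zeta_0}\omega,n}-E]|}.$$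
   Context: Let $\widetilde\mu$ be a Borel probability measure on $\mathbb R$ with compact support $\mathcal A$ containing at least two points; $\Omega=\mathcal A^{\mathbb Z}$, $\mu=\widetilde\mu^{\mathbb Z}$, $(T\omega)_n=\omega_{n+1}$; $[H_\omega\psi](n)=\psi(n+1)+\psi(n-1)+\omega_n\psi(n)$ on $\ell^2(\mathbb Z)$. For $E\in\mathbb R$, $M^E(\alpha)=\begin{pmatrix}E-\alpha&-1\\1&0\end{pmatrix}$, $M_n^E(\omega)=M^E(\omega_{n-1})\cdots M^E(\omega_0)$ for $n\ge1$, $F_n(\omega,E)=\frac1n\log\|M_n^E(\omega)\|$, $L(E)=\lim_{n\to\infty}\frac1n\int\log\|M_n^E\|\,d\mu$. $\hat\Sigma=[-\kappa,\kappa]$ with $\kappa=2+\max_{\alpha\in\mathcal A}|\alpha|$. For $N\in\mathbb Z_+$, $H_{\omega,N}=P_{[0,N)}H_\omega P_{[0,N)}^*$ is the restriction of $H_\omega$ to $\ell^2([0,N)\cap\mathbb Z)$ ($P_\Lambda$ the coordinate projection), and $G^E_{\omega,N}(j,k)=\langle\delta_j,(H_{\omega,N}-E)^{-1}\delta_k\rangle$. *)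

(* Defs.v *)
From Stdlib Require Import Reals Lra List ClassicalEpsilon.
Open Scope R_scope.

(* A Borel probability measure on R with compact support is represented (Riesz)
   by its integration functional I on continuous functions: linear, positive,
   normalized, and depending only on the values on some compact [-B,B]. *)
Definition prob_functional (I : (R -> R) -> R) : Prop :=
  (forall f g, continuity f -> continuity g ->
     I (fun x => f x + g x) = I f + I g) /\
  (forall (c : R) f, continuity f -> I (fun x => c * f x) = c * I f) /\
  (forall f, continuity f -> (forall x, 0 <= f x) -> 0 <= I f) /\
  I (fun _ => 1) = 1 /\
  (exists B : R, forall f g, continuity f -> continuity g ->
     (forall x, -B <= x <= B -> f x = g x) -> I f = I g).

Definition in_support (I : (R -> R) -> R) (x : R) : Prop :=
  forall f, continuity f -> (forall y, 0 <= f y) -> 0 < f x -> 0 < I f.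

(* iterated integral over the product measure on n coordinates;
   the list l = [a_0; ...; a_{n-1}] holds the coordinates *)
Fixpoint iter_int (I : (R -> R) -> R) (n : nat) (g : list R -> R) : R :=
  match n with
  | O => g nil
  | S k => I (fun a => iter_int I k (fun l => g (a :: l)))
  end.

Record mat2 := Mat2 { m11 : R; m12 : R; m21 : R; m22 : R }.

Definition mmul (A B : mat2) : mat2 :=
  Mat2 (m11 A * m11 B + m12 A * m21 B) (m11 A * m12 B + m12 A * m22 B)
       (m21 A * m11 B + m22 A * m21 B) (m21 A * m12 B + m22 A * m22 B).

Definition mid : mat2 := Mat2 1 0 0 1.

Definition transfer (E a : R) : mat2 := Mat2 (E - a) (-1) 1 0.

Fixpoint Mn (E : R) (w : Z -> R) (n : nat) : mat2 :=
  match n with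
  | O => mid
  | S k => mmul (transfer E (w (Z.of_nat k))) (Mn E w k)
  end.

Definition vnorm (x y : R) : R := sqrt (x * x + y * y).

Definition opnorm_set (A : mat2) (r : R) : Prop :=
  exists x y, vnorm x y = 1 /\
    r = vnorm (m11 A * x + m12 A * y) (m21 A * x + m22 A * y).

Definition opnorm (A : mat2) : R :=
  epsilon (inhabits 0) (fun r => is_lub (opnorm_set A) r).

Definition Fn (n : nat) (w : Z -> R) (E : R) : R :=
  / INR n * ln (opnorm (Mn E w n)).

Definition shift (z : Z) (w : Z -> R) : Z -> R := fun m => w (m + z)%Z.

Definition lyap_seq (I : (R -> R) -> R) (E : R) (n : nat) : R :=
  / INR n * iter_int I n
     (fun l => ln (opnorm (Mn E (fun z => nth (Z.to_nat z) l 0) n))).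

Fixpoint rsum (n : nat) (f : nat -> R) : R :=
  match n with
  | O => 0
  | S k => rsum k f + f k
  end.

(* matrix of H_{w,N} = P_[0,N) H_w P_[0,N)^* in the basis delta_0..delta_{N-1} *)
Definition Hmat (w : Z -> R) (i j : nat) : R :=
  if Nat.eqb i j then w (Z.of_nat i)
  else if orb (Nat.eqb i (S j)) (Nat.eqb j (S i)) then 1 else 0.

Definition minor (j : nat) (A : nat -> nat -> R) : nat -> nat -> R :=
  fun r c => A (S r) (if Nat.ltb c j then c else S c).

Fixpoint det (n : nat) (A : nat -> nat -> R) : R :=
  match n with
  | O => 1
  | S k => rsum (S k) (fun j => (-1) ^ j * A O j * det k (minor j A))
  end.

Definition shiftE (A : nat -> nat -> R) (E : R) : nat -> nat -> R :=
  fun i j => A i j - (if Nat.eqb i j then E else 0).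

Definition in_spec (n : nat) (A : nat -> nat -> R) (E : R) : Prop :=
  exists psi : nat -> R, (exists i, (i < n)%nat /\ psi i <> 0) /\
    forall i, (i < n)%nat -> rsum n (fun m => A i m * psi m) = E * psi i.

(* g restricted to [0,n) solves (A - E) g = delta_k, i.e. g j = ((A-E)^{-1})(j,k) *)
Definition green_col (n : nat) (A : nat -> nat -> R) (E : R) (k : nat)
    (g : nat -> R) : Prop :=
  forall i, (i < n)%nat ->
    rsum n (fun m => shiftE A E i m * g m) = (if Nat.eqb i k then 1 else 0).

(* Main.v *)
Require Import Defs.
From Stdlib Require Import Reals List.
From Stdlib Require Import Lra Lia ClassicalEpsilon FunctionalExtensionality.
Open Scope R_scope.

Lemma vnorm_ge0 x y : 0 <= vnorm x y.
Proof. unfold vnorm; apply sqrt_pos. Qed.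

Lemma vnorm_sq x y : vnorm x y * vnorm x y = x * x + y * y.
Proof. unfold vnorm; apply sqrt_sqrt; nra. Qed.

Lemma vnorm_abs1 x y : Rabs x <= vnorm x y.
Proof.
  pose proof (vnorm_sq x y). pose proof (vnorm_ge0 x y).
  destruct (Rle_dec (Rabs x) (vnorm x y)) as [h|h]; auto.
  assert (Rabs x * Rabs x = x * x) by (rewrite <- Rabs_mult; apply Rabs_right; nra).
  nra.
Qed.

Lemma vnorm_10 : vnorm 1 0 = 1.
Proof. unfold vnorm. replace (1*1+0*0) with 1 by ring. apply sqrt_1. Qed.
Lemma vnorm_01 : vnorm 0 1 = 1.
Proof. unfold vnorm. replace (0*0+1*1) with 1 by ring. apply sqrt_1. Qed.

Lemma vnorm_scale c x y : vnorm (c * x) (c * y) = Rabs c * vnorm x y.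
Proof.
  unfold vnorm. replace (c*x*(c*x)+c*y*(c*y)) with ((c*c)*(x*x+y*y)) by ring.
  rewrite sqrt_mult by nra. f_equal.
  exact (sqrt_Rsqr_abs c).
Qed.

Lemma sqr_nn t : 0 <= t * t.
Proof. pose proof (Rle_0_sqr t). unfold Rsqr in H. exact H. Qed.

Lemma sq_le_sqrt a b : 0 <= b -> a * a <= b * b -> a <= b.
Proof. intros. nra. Qed.

Definition frob (A : mat2) : R :=
  sqrt (m11 A * m11 A + m12 A * m12 A + m21 A * m21 A + m22 A * m22 A).

Lemma frob_ge0 A : 0 <= frob A.
Proof. apply sqrt_pos. Qed.

Lemma app_frob A x y :
  vnorm (m11 A * x + m12 A * y) (m21 A * x + m22 A * y) <= frob A * vnorm x y.
Proof.
  unfold frob, vnorm. rewrite <- sqrt_mult by nra.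
  apply sqrt_le_1_alt.
  set (a := m11 A); set (b := m12 A); set (c := m21 A); set (d := m22 A).
  pose proof (sqr_nn (a*y - b*x)).
  pose proof (sqr_nn (c*y - d*x)).
  assert ((a*a+b*b+c*c+d*d)*(x*x+y*y) - ((a*x+b*y)*(a*x+b*y)+(c*x+d*y)*(c*x+d*y))
     = (a*y - b*x)*(a*y-b*x) + (c*y - d*x)*(c*y-d*x)) by ring.
  lra.
Qed.

Lemma opnorm_lub A : is_lub (opnorm_set A) (opnorm A).
Proof.
  unfold opnorm. apply epsilon_spec.
  destruct (completeness (opnorm_set A)) as [m Hm].
  - exists (frob A). intros r [x [y [h1 h2]]]. subst r.
    pose proof (app_frob A x y). rewrite h1 in H. lra.
  - exists (vnorm (m11 A * 1 + m12 A * 0) (m21 A * 1 + m22 A * 0)).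
    exists 1, 0. split; auto. apply vnorm_10.
  - exists m; auto.
Qed.

Lemma opnorm_ge A x y : vnorm x y = 1 ->
  vnorm (m11 A * x + m12 A * y) (m21 A * x + m22 A * y) <= opnorm A.
Proof. intros h. destruct (opnorm_lub A) as [h1 _]. apply h1. exists x, y; auto. Qed.

Lemma opnorm_le A c : (forall x y, vnorm x y = 1 ->
  vnorm (m11 A * x + m12 A * y) (m21 A * x + m22 A * y) <= c) -> opnorm A <= c.
Proof. intros h. destruct (opnorm_lub A) as [_ h2]. apply h2.
  intros r [x [y [h1 h3]]]. subst r. auto. Qed.

Lemma opnorm_col1 A : vnorm (m11 A) (m21 A) <= opnorm A.
Proof. pose proof (opnorm_ge A 1 0 vnorm_10).
  replace (m11 A * 1 + m12 A * 0) with (m11 A) in H by ring.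
  replace (m21 A * 1 + m22 A * 0) with (m21 A) in H by ring. exact H. Qed.

Lemma opnorm_col2 A : vnorm (m12 A) (m22 A) <= opnorm A.
Proof. pose proof (opnorm_ge A 0 1 vnorm_01).
  replace (m11 A * 0 + m12 A * 1) with (m12 A) in H by ring.
  replace (m21 A * 0 + m22 A * 1) with (m22 A) in H by ring. exact H. Qed.

Lemma opnorm_ge0 A : 0 <= opnorm A.
Proof. pose proof (opnorm_col1 A). pose proof (vnorm_ge0 (m11 A) (m21 A)). lra. Qed.

Lemma opnorm_m11 A : Rabs (m11 A) <= opnorm A.
Proof. pose proof (opnorm_col1 A). pose proof (vnorm_abs1 (m11 A) (m21 A)). lra. Qed.

Lemma opnorm_frob A : opnorm A <= frob A.
Proof. apply opnorm_le. intros x y h. pose proof (app_frob A x y). rewrite h in H. lra. Qed.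

Lemma vnorm_zero x y : vnorm x y = 0 -> x = 0 /\ y = 0.
Proof. intros h. pose proof (vnorm_sq x y). rewrite h in H. split; nra. Qed.

Lemma opnorm_app A x y :
  vnorm (m11 A * x + m12 A * y) (m21 A * x + m22 A * y) <= opnorm A * vnorm x y.
Proof.
  pose proof (vnorm_ge0 x y). pose proof (opnorm_ge0 A).
  destruct (Req_dec (vnorm x y) 0) as [h|h].
  - destruct (vnorm_zero x y h); subst. rewrite h.
    replace (m11 A * 0 + m12 A * 0) with 0 by ring.
    replace (m21 A * 0 + m22 A * 0) with 0 by ring.
    assert (vnorm 0 0 = 0).
    { unfold vnorm. replace (0*0+0*0) with 0 by ring. apply sqrt_0. }
    rewrite H1. lra.
  - set (r := vnorm x y) in *.
    assert (hr : 0 < r) by lra.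
    assert (h1 : vnorm (/r * x) (/r * y) = 1).
    { rewrite vnorm_scale. fold r. rewrite Rabs_right. field. lra.
      left; apply Rinv_0_lt_compat; lra. }
    pose proof (opnorm_ge A _ _ h1).
    replace (m11 A * (/ r * x) + m12 A * (/ r * y)) with (/r * (m11 A * x + m12 A * y)) in H1 by ring.
    replace (m21 A * (/ r * x) + m22 A * (/ r * y)) with (/r * (m21 A * x + m22 A * y)) in H1 by ring.
    rewrite vnorm_scale in H1. rewrite Rabs_right in H1 by (left; apply Rinv_0_lt_compat; lra).
    apply Rmult_le_compat_l with (r := r) in H1; [|lra].
    rewrite <- Rmult_assoc, Rinv_r, Rmult_1_l in H1 by lra. lra.
Qed.

Lemma opnorm_mul A B : opnorm (mmul A B) <= opnorm A * opnorm B.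
Proof.
  apply opnorm_le. intros x y h.
  set (u := m11 B * x + m12 B * y). set (v := m21 B * x + m22 B * y).
  replace (m11 (mmul A B) * x + m12 (mmul A B) * y) with (m11 A * u + m12 A * v)
    by (unfold u, v; simpl; ring).
  replace (m21 (mmul A B) * x + m22 (mmul A B) * y) with (m21 A * u + m22 A * v)
    by (unfold u, v; simpl; ring).
  pose proof (opnorm_app A u v). pose proof (opnorm_ge B x y h). fold u v in H0.
  pose proof (opnorm_ge0 A). nra.
Qed.

Lemma opnorm_det1 A : m11 A * m22 A - m12 A * m21 A = 1 -> 1 <= opnorm A.
Proof.
  intros hd.
  pose proof (opnorm_col1 A). pose proof (opnorm_col2 A).
  set (c1 := vnorm (m11 A) (m21 A)) in *. set (c2 := vnorm (m12 A) (m22 A)) in *.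
  assert (hc : (c1*c2)*(c1*c2) = (m11 A * m11 A + m21 A * m21 A)*(m12 A * m12 A + m22 A * m22 A)).
  { unfold c1, c2. rewrite <- (vnorm_sq (m11 A)), <- (vnorm_sq (m12 A)). ring. }
  assert (1 <= (c1*c2)*(c1*c2)).
  { rewrite hc. set (a:=m11 A); set (b:=m12 A); set (c:=m21 A); set (d:=m22 A).
    pose proof (sqr_nn (a*b+c*d)).
    assert ((a*a+c*c)*(b*b+d*d) = (a*d-b*c)*(a*d-b*c) + (a*b+c*d)*(a*b+c*d)) by ring.
    assert (1 = (a*d-b*c)*(a*d-b*c)) by (unfold a,b,c,d; rewrite hd; ring). lra. }
  assert (0 <= c1) by apply vnorm_ge0. assert (0 <= c2) by apply vnorm_ge0.
  assert (0 <= c1 * c2) by (apply Rmult_le_pos; auto).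
  assert (1 <= c1 * c2).
  { destruct (Rle_dec 1 (c1*c2)); auto.
    assert ((c1*c2)*(c1*c2) <= (c1*c2)*1) by (apply Rmult_le_compat_l; lra). lra. }
  assert (c1*c2 <= opnorm A * opnorm A) by (apply Rmult_le_compat; auto).
  pose proof (opnorm_ge0 A).
  destruct (Rle_dec 1 (opnorm A)); auto.
  assert (opnorm A * opnorm A <= opnorm A * 1) by (apply Rmult_le_compat_l; lra). lra.
Qed.

Lemma opnorm_mid : opnorm mid <= 1.
Proof. apply opnorm_le. intros x y h. simpl.
  replace (1*x+0*y) with x by ring. replace (0*x+1*y) with y by ring. lra. Qed.

Lemma mat2_eq a b c d a' b' c' d' : a = a' -> b = b' -> c = c' -> d = d' ->
  Mat2 a b c d = Mat2 a' b' c' d'.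
Proof. intros; subst; auto. Qed.

Lemma mmul_assoc A B C : mmul A (mmul B C) = mmul (mmul A B) C.
Proof. destruct A, B, C; unfold mmul; simpl; apply mat2_eq; ring. Qed.
Lemma mmul_id_l A : mmul mid A = A.
Proof. destruct A; unfold mmul, mid; simpl; apply mat2_eq; ring. Qed.
Lemma mmul_id_r A : mmul A mid = A.
Proof. destruct A; unfold mmul, mid; simpl; apply mat2_eq; ring. Qed.

Lemma shift_shift a b w : shift a (shift b w) = shift (b + a)%Z w.
Proof. extensionality m. unfold shift. f_equal. lia. Qed.
Lemma shift0 w : shift 0%Z w = w.
Proof. extensionality m. unfold shift. f_equal. lia. Qed.

Lemma Mn_add E w a b :
  Mn E w (a + b) = mmul (Mn E (shift (Z.of_nat a) w) b) (Mn E w a).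
Proof.
  induction b.
  - rewrite Nat.add_0_r. simpl. rewrite mmul_id_l. auto.
  - rewrite Nat.add_succ_r. simpl. rewrite IHb, mmul_assoc. f_equal. f_equal. f_equal.
    unfold shift. f_equal. lia.
Qed.

Lemma Mn_peel E w n : Mn E w (S n) = mmul (Mn E (shift 1 w) n) (transfer E (w 0%Z)).
Proof.
  change (S n) with (1 + n)%nat. rewrite Mn_add. simpl. rewrite mmul_id_r. auto.
Qed.

Lemma Mn_det E w n : m11 (Mn E w n) * m22 (Mn E w n) - m12 (Mn E w n) * m21 (Mn E w n) = 1.
Proof. induction n; simpl. ring.
  transitivity (m11 (Mn E w n) * m22 (Mn E w n) - m12 (Mn E w n) * m21 (Mn E w n)); [ring | exact IHn]. Qed.

Lemma Mn_ge1 E w n : 1 <= opnorm (Mn E w n).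
Proof. apply opnorm_det1, Mn_det. Qed.

Definition p (E : R) (w : Z -> R) (n : nat) : R := m11 (Mn E w n).

Lemma p0 E w : p E w 0 = 1.
Proof. reflexivity. Qed.
Lemma p1 E w : p E w 1 = E - w 0%Z.
Proof. unfold p. simpl. ring. Qed.

Lemma pR2 E w m : p E w (S (S m)) = (E - w (Z.of_nat (S m))) * p E w (S m) - p E w m.
Proof. unfold p. change (Mn E w (S (S m))) with (mmul (transfer E (w (Z.of_nat (S m)))) (Mn E w (S m))).
  change (Mn E w (S m)) with (mmul (transfer E (w (Z.of_nat m))) (Mn E w m)). simpl. ring. Qed.

Lemma pR1 E w m : p E w (S (S m)) = (E - w 0%Z) * p E (shift 1 w) (S m) - p E (shift 2 w) m.
Proof.
  unfold p. rewrite Mn_peel. rewrite (Mn_peel E (shift 1 w) m). rewrite shift_shift.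
  simpl. ring.
Qed.

Lemma frob_transfer_le E a K : Rabs (E - a) + 2 <= K -> opnorm (transfer E a) <= K.
Proof.
  intros h. eapply Rle_trans; [apply opnorm_frob|]. unfold frob; simpl.
  apply Rle_trans with (Rabs (E - a) + 2); auto.
  apply sq_le_sqrt. pose proof (Rabs_pos (E-a)); lra.
  rewrite sqrt_sqrt by (pose proof (sqr_nn (E-a)); lra).
  assert (Rabs (E-a) * Rabs (E-a) = (E-a)*(E-a)) by (rewrite <- Rabs_mult; apply Rabs_right; apply Rle_ge, sqr_nn).
  pose proof (Rabs_pos (E-a)). nra.
Qed.

Definition tinv (E a : R) : mat2 := Mat2 0 1 (-1) (E - a).

Lemma frob_tinv_le E a K : Rabs (E - a) + 2 <= K -> opnorm (tinv E a) <= K.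
Proof.
  intros h. eapply Rle_trans; [apply opnorm_frob|]. unfold frob; simpl.
  apply Rle_trans with (Rabs (E - a) + 2); auto.
  apply sq_le_sqrt. pose proof (Rabs_pos (E-a)); lra.
  rewrite sqrt_sqrt by (pose proof (sqr_nn (E-a)); lra).
  assert (Rabs (E-a) * Rabs (E-a) = (E-a)*(E-a)) by (rewrite <- Rabs_mult; apply Rabs_right; apply Rle_ge, sqr_nn).
  pose proof (Rabs_pos (E-a)). nra.
Qed.

Fixpoint Minv (E : R) (w : Z -> R) (d : nat) : mat2 :=
  match d with
  | O => mid
  | S d' => mmul (Minv E w d') (tinv E (w (Z.of_nat d')))
  end.

Lemma Minv_Mn E w d : mmul (Minv E w d) (Mn E w d) = mid.
Proof.
  induction d; simpl. apply mmul_id_l.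
  rewrite mmul_assoc. rewrite <- (mmul_assoc (Minv E w d)).
  replace (mmul (tinv E (w (Z.of_nat d))) (transfer E (w (Z.of_nat d)))) with mid.
  rewrite mmul_id_r. auto.
  unfold mmul, tinv, transfer, mid; simpl; apply mat2_eq; ring.
Qed.

Lemma Mn_bound E w K n : 0 <= K -> (forall m, Rabs (E - w m) + 2 <= K) ->
  opnorm (Mn E w n) <= K ^ n.
Proof.
  intros hK h. induction n; simpl. apply opnorm_mid.
  eapply Rle_trans; [apply opnorm_mul|]. apply Rmult_le_compat; auto using opnorm_ge0.
  apply frob_transfer_le; auto.
Qed.

Lemma Minv_bound E w K n : 0 <= K -> (forall m, Rabs (E - w m) + 2 <= K) ->
  opnorm (Minv E w n) <= K ^ n.
Proof.
  intros hK h. induction n; simpl. apply opnorm_mid.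
  eapply Rle_trans; [apply opnorm_mul|]. rewrite Rmult_comm.
  apply Rmult_le_compat; auto using opnorm_ge0.
  apply frob_tinv_le; auto.
Qed.

Lemma rsum_S_left n f : rsum (S n) f = f 0%nat + rsum n (fun j => f (S j)).
Proof. induction n. simpl. ring. change (rsum (S (S n)) f) with (rsum (S n) f + f (S n)).
  rewrite IHn. simpl. ring. Qed.

Lemma rsum_ext n f g : (forall j, (j < n)%nat -> f j = g j) -> rsum n f = rsum n g.
Proof. induction n; intros h; simpl; auto. rewrite IHn by (intros; apply h; lia).
  rewrite h by lia. auto. Qed.

Lemma rsum_zero n f : (forall j, (j < n)%nat -> f j = 0) -> rsum n f = 0.
Proof. intros h. rewrite (rsum_ext n f (fun _ => 0)) by auto. clear h.
  induction n; simpl; auto. rewrite IHn; ring. Qed.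

Lemma rsum_plus n f g : rsum n (fun j => f j + g j) = rsum n f + rsum n g.
Proof. induction n; simpl. ring. rewrite IHn; ring. Qed.

Lemma rsum_scal n c f : rsum n (fun j => c * f j) = c * rsum n f.
Proof. induction n; simpl. ring. rewrite IHn; ring. Qed.

Lemma rsum_delta n a c : rsum n (fun m => if Nat.eqb m a then c else 0) =
  if Nat.ltb a n then c else 0.
Proof.
  induction n; simpl. destruct a; reflexivity.
  rewrite IHn. destruct (Nat.eqb_spec n a); destruct (Nat.ltb_spec a n); destruct (Nat.ltb_spec a (S n));
  subst; try lia; ring.
Qed.

Lemma rsum_le n f c : (forall j, (j < n)%nat -> f j <= c) -> rsum n f <= INR n * c.
Proof. induction n; intros h. simpl. lra. change (rsum (S n) f) with (rsum n f + f n). rewrite S_INR.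
  assert (rsum n f <= INR n * c) by (apply IHn; intros; apply h; lia).
  assert (f n <= c) by (apply h; lia). lra. Qed.

Lemma det_col0_zero m M : (forall r, M r 0%nat = 0) -> det (S m) M = 0.
Proof.
  revert M. induction m; intros M h.
  - simpl. rewrite h. ring.
  - change (det (S (S m)) M) with
      (rsum (S (S m)) (fun j => (-1) ^ j * M O j * det (S m) (minor j M))).
    apply rsum_zero. intros j hj. destruct j.
    + rewrite h. ring.
    + rewrite IHm. ring. intros r. unfold minor. simpl. apply h.
Qed.

Lemma det_tri n A : (forall j, A 0%nat (S (S j)) = 0) -> (forall r, A (S (S r)) 0%nat = 0) ->
  det (S (S n)) A = A 0%nat 0%nat * det (S n) (minor 0 A)
     - A 0%nat 1%nat * A 1%nat 0%nat * det n (minor 0 (minor 0 A)).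
Proof.
  intros h1 h2.
  change (det (S (S n)) A) with
      (rsum (S (S n)) (fun j => (-1) ^ j * A O j * det (S n) (minor j A))).
  rewrite rsum_S_left, rsum_S_left.
  rewrite (rsum_zero n) by (intros j _; rewrite h1; ring).
  assert (det (S n) (minor 1 A) = A 1%nat 0%nat * det n (minor 0 (minor 0 A))).
  { change (det (S n) (minor 1 A)) with
      (rsum (S n) (fun j => (-1) ^ j * minor 1 A O j * det n (minor j (minor 1 A)))).
    rewrite rsum_S_left.
    rewrite (rsum_zero n).
    - replace (minor 0 (minor 1 A)) with (minor 0 (minor 0 A)).
      replace (minor 1 A 0%nat 0%nat) with (A 1%nat 0%nat) by reflexivity.
      change ((-1)^0) with 1. ring.
      extensionality r; extensionality c. unfold minor. simpl. reflexivity.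
    - intros j hj. destruct n. lia. rewrite det_col0_zero. ring.
      intros r. unfold minor. simpl. apply h2. }
  rewrite H. simpl. ring.
Qed.

Lemma minor0_H E w : minor 0 (shiftE (Hmat w) E) = shiftE (Hmat (shift 1 w)) E.
Proof.
  extensionality r; extensionality c. unfold minor, shiftE, Hmat. simpl.
  destruct (Nat.eqb r c); auto. unfold shift. do 3 f_equal. lia.
Qed.

Lemma det_H_rec E w n : det (S (S n)) (shiftE (Hmat w) E) =
  (w 0%Z - E) * det (S n) (shiftE (Hmat (shift 1 w)) E) - det n (shiftE (Hmat (shift 2 w)) E).
Proof.
  rewrite det_tri.
  - rewrite !minor0_H, shift_shift. simpl (1+1)%Z.
    unfold shiftE, Hmat. simpl. ring.
  - intros j. unfold shiftE, Hmat. simpl. destruct j; simpl; ring.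
  - intros r. unfold shiftE, Hmat. simpl. destruct r; simpl; ring.
Qed.

Lemma det_H_p E n : forall w, det n (shiftE (Hmat w) E) = (-1) ^ n * p E w n.
Proof.
  assert (forall n, (forall w, det n (shiftE (Hmat w) E) = (-1) ^ n * p E w n) /\
                    (forall w, det (S n) (shiftE (Hmat w) E) = (-1) ^ (S n) * p E w (S n))).
  { induction n0.
    - split; intros w. simpl. unfold p; simpl. ring.
      rewrite p1. simpl. unfold shiftE, Hmat. simpl. ring.
    - destruct IHn0 as [h1 h2]. split; auto. intros w.
      rewrite det_H_rec, h1, h2, pR1. simpl. ring. }
  apply H.
Qed.

Lemma Hmat_pt w i m g : Hmat w i m * g m =
  (if Nat.eqb m i then w (Z.of_nat i) * g i else 0) +
  (if Nat.eqb m (S i) then g (S i) else 0) +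
  (match i with O => 0 | S i' => if Nat.eqb m i' then g i' else 0 end).
Proof.
  unfold Hmat. destruct i;
  repeat match goal with |- context [Nat.eqb ?a ?b] => destruct (Nat.eqb_spec a b) end;
  simpl; try (exfalso; lia); subst; try ring.
Qed.

Lemma Hrow w n g i : (i < n)%nat ->
  rsum n (fun m => Hmat w i m * g m) =
  w (Z.of_nat i) * g i + (match i with O => 0 | S i' => g i' end) +
  (if Nat.ltb (S i) n then g (S i) else 0).
Proof.
  intros hi.
  rewrite (rsum_ext n _ _ (fun m _ => Hmat_pt w i m g)).
  rewrite !rsum_plus, !rsum_delta.
  destruct (Nat.ltb_spec i n); try lia.
  destruct i.
  - rewrite rsum_zero by auto. ring.
  - rewrite rsum_delta. destruct (Nat.ltb_spec i n); try lia. ring.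
Qed.

Lemma Srow w E n g i : (i < n)%nat ->
  rsum n (fun m => shiftE (Hmat w) E i m * g m) =
  (w (Z.of_nat i) - E) * g i + (match i with O => 0 | S i' => g i' end) +
  (if Nat.ltb (S i) n then g (S i) else 0).
Proof.
  intros hi.
  rewrite (rsum_ext n _ (fun m => Hmat w i m * g m + (-1) * (if Nat.eqb m i then E * g i else 0))).
  - rewrite rsum_plus, rsum_scal, rsum_delta, Hrow by auto.
    destruct (Nat.ltb_spec i n); try lia. ring.
  - intros m _. unfold shiftE. destruct (Nat.eqb_spec i m); destruct (Nat.eqb_spec m i); subst; try lia; ring.
Qed.

Lemma shift_at0 z w : shift z w 0%Z = w z.
Proof. reflexivity. Qed.

Definition Phim E w j := match j with O => 0 | S j' => p E w j' end.
Definition Psi E w n j := p E (shift (Z.of_nat j) w) (n - j).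

Lemma extR2 E w j : p E w (S j) = (E - w (Z.of_nat j)) * p E w j - Phim E w j.
Proof. destruct j. rewrite p1. simpl. unfold p. simpl. ring. rewrite pR2. simpl. ring. Qed.

Lemma extR1 E w n i : (i < n)%nat ->
  Psi E w n i = (E - w (Z.of_nat i)) * Psi E w n (S i) -
    (if Nat.ltb (S i) n then Psi E w n (S (S i)) else 0).
Proof.
  intros hi. unfold Psi. destruct (Nat.ltb_spec (S i) n).
  - replace (n - i)%nat with (S (S (n - S (S i)))) by lia.
    replace (n - S i)%nat with (S (n - S (S i))) by lia.
    rewrite pR1. rewrite !shift_shift, shift_at0.
    replace (Z.of_nat i + 1)%Z with (Z.of_nat (S i)) by lia.
    replace (Z.of_nat i + 2)%Z with (Z.of_nat (S (S i))) by lia. ring.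
  - replace (n - i)%nat with 1%nat by lia. replace (n - S i)%nat with 0%nat by lia.
    rewrite p1, p0, shift_at0. ring.
Qed.

Lemma wronsk E b : forall k w,
  p E w k * p E (shift (Z.of_nat (S (S k))) w) b
  - p E w (S k) * p E (shift (Z.of_nat (S k)) w) (S b) = - p E w (k + b + 2).
Proof.
  induction b; intros k w.
  - rewrite p0, p1. replace (k + 0 + 2)%nat with (S (S k)) by lia. rewrite pR2.
    rewrite shift_at0. ring.
  - rewrite pR1. rewrite !shift_shift.
    replace (Z.of_nat (S k) + 1)%Z with (Z.of_nat (S (S k))) by lia.
    replace (Z.of_nat (S k) + 2)%Z with (Z.of_nat (S (S (S k)))) by lia.
    rewrite shift_at0.
    pose proof (IHb (S k) w). pose proof (extR2 E w (S k)). simpl Phim in H0.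
    replace (k + S b + 2)%nat with (S k + b + 2)%nat by lia.
    rewrite <- H. rewrite H0. ring.
Qed.

Lemma eigen_of_zero E w n : (1 <= n)%nat -> p E w n = 0 -> in_spec n (Hmat w) E.
Proof.
  intros hn h0. exists (fun i => Psi E w n (S i)). split.
  - exists (n - 1)%nat. split. lia. unfold Psi. replace (n - S (n-1))%nat with 0%nat by lia.
    rewrite p0. lra.
  - intros i hi. rewrite Hrow by auto.
    pose proof (extR1 E w n i hi).
    destruct i.
    + unfold Psi at 1 in H. simpl in H. rewrite shift0, Nat.sub_0_r, h0 in H.
      destruct (Nat.ltb (S 0) n); simpl; lra.
    + destruct (Nat.ltb (S (S i)) n); lra.
Qed.

Section Green.
Variables (E : R) (w : Z -> R) (n k : nat) (g : nat -> R).
Hypothesis hk : (k < n)%nat.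
Hypothesis hg : green_col n (Hmat w) E k g.

Let eqn i : (i < n)%nat -> (w (Z.of_nat i) - E) * g i + (match i with O => 0 | S i' => g i' end) +
  (if Nat.ltb (S i) n then g (S i) else 0) = if Nat.eqb i k then 1 else 0.
Proof. intros hi. rewrite <- Srow by auto. apply hg; auto. Qed.

Lemma green_left : forall j, (j <= k)%nat ->
  g j = g 0%nat * p E w j /\ (match j with O => 0 | S i' => g i' end) = g 0%nat * Phim E w j.
Proof.
  induction j; intros hj.
  - rewrite p0. simpl. split; ring.
  - destruct IHj as [h1 h2]. lia.
    pose proof (eqn j ltac:(lia)) as he.
    destruct (Nat.eqb_spec j k) as [hq|hq]; try lia.
    destruct (Nat.ltb_spec (S j) n) as [hl|hl]; try lia.
    split.
    + rewrite extR2. assert (hs : g (S j) = (E - w (Z.of_nat j)) * g j - (match j with O => 0 | S i' => g i' end)) by lra.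
      rewrite hs, h1, h2. ring.
    + simpl. auto.
Qed.

Lemma green_right : forall d i, (i + d = n - 1)%nat -> (k <= i)%nat ->
  g i = g (n - 1)%nat * Psi E w n (S i) /\
  (if Nat.ltb (S i) n then g (S i) else 0) =
     g (n-1)%nat * (if Nat.ltb (S i) n then Psi E w n (S (S i)) else 0).
Proof.
  induction d; intros i hi hki.
  - replace i with (n-1)%nat by lia. unfold Psi. replace (n - S (n - 1))%nat with 0%nat by lia.
    rewrite p0. destruct (Nat.ltb_spec (S (n-1)) n); try lia. split; ring.
  - destruct (IHd (S i)) as [h1 h2]; try lia.
    pose proof (eqn (S i) ltac:(lia)) as he.
    destruct (Nat.eqb_spec (S i) k) as [hq|hq]; try lia.
    pose proof (extR1 E w n (S i) ltac:(lia)) as hx.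
    destruct (Nat.ltb_spec (S i) n) as [hl|hl]; try lia.
    split; [|auto].
    assert (hs : g i = (E - w (Z.of_nat (S i))) * g (S i) - (if Nat.ltb (S (S i)) n then g (S (S i)) else 0)) by lra.
    rewrite hs, hx, h1, h2. ring.
Qed.

Lemma green_formula : p E w n <> 0 -> forall j, (j < n)%nat ->
  ((j <= k)%nat -> Rabs (g j) * Rabs (p E w n) = Rabs (p E w j) * Rabs (Psi E w n (S k))) /\
  ((k <= j)%nat -> Rabs (g j) * Rabs (p E w n) = Rabs (Psi E w n (S j)) * Rabs (p E w k)).
Proof.
  intros hp j hj.
  destruct (green_left k (le_n k)) as [l1 l2].
  destruct (green_right (n - 1 - k) k ltac:(lia) (le_n k)) as [r1 r2].
  pose proof (eqn k hk). rewrite Nat.eqb_refl in H.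
  set (Psx := if Nat.ltb (S k) n then Psi E w n (S (S k)) else 0) in *.
  assert (hw : p E w k * Psx - p E w (S k) * Psi E w n (S k) = - p E w n).
  { unfold Psx. destruct (Nat.ltb_spec (S k) n).
    - unfold Psi. pose proof (wronsk E (n - S (S k)) k w) as hw0.
      replace (k + (n - S (S k)) + 2)%nat with n in hw0 by lia.
      replace (S (n - S (S k))) with (n - S k)%nat in hw0 by lia. exact hw0.
    - replace n with (S k) by lia. unfold Psi. rewrite Nat.sub_diag, p0. ring. }
  pose proof (extR2 E w k).
  assert (hkey : - (g 0%nat) * p E w (S k) + (g (n-1)%nat) * Psx = 1).
  { rewrite l1, l2, r2 in H. rewrite H0. lra. }

  assert (ha : (g 0%nat) * (- p E w n) = Psi E w n (S k)).
  { rewrite <- hw.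
    transitivity (Psx * ((g 0%nat) * p E w k - (g (n-1)%nat) * Psi E w n (S k)) + Psi E w n (S k) * (- (g 0%nat) * p E w (S k) + (g (n-1)%nat) * Psx)); [ring|].
    rewrite <- l1, <- r1, hkey. ring. }
  assert (hb : (g (n-1)%nat) * (- p E w n) = p E w k).
  { rewrite <- hw.
    transitivity (p E w k * (- (g 0%nat) * p E w (S k) + (g (n-1)%nat) * Psx) + p E w (S k) * ((g 0%nat) * p E w k - (g (n-1)%nat) * Psi E w n (S k))); [ring|].
    rewrite <- l1, <- r1, hkey. ring. }
  split; intros hjk.
  - destruct (green_left j hjk) as [e _]. rewrite e.
    rewrite <- ha, !Rabs_mult, Rabs_Ropp. ring.
  - destruct (green_right (n - 1 - j) j ltac:(lia) hjk) as [e _]. rewrite e.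
    rewrite <- hb, !Rabs_mult, Rabs_Ropp. ring.
Qed.
End Green.

Lemma ln_le' x y : 0 < x -> x <= y -> ln x <= ln y.
Proof. intros hx [h|h]. left; apply ln_increasing; auto. subst; lra. Qed.

Lemma exp_le' x y : x <= y -> exp x <= exp y.
Proof. intros [h|h]. left; apply exp_increasing; auto. subst; lra. Qed.

Lemma ln_0' : ln 0 = 0.
Proof. unfold ln. destruct (Rlt_dec 0 0) as [h|h]. exfalso; apply (Rlt_irrefl 0 h). reflexivity. Qed.

Lemma ln_ge0 x : 1 <= x -> 0 <= ln x.
Proof. intros h. rewrite <- ln_1. apply ln_le'; lra. Qed.

Lemma ln_opnorm_ge0 E w n : 0 <= ln (opnorm (Mn E w n)).
Proof. apply ln_ge0, Mn_ge1. Qed.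

Lemma opnorm_pos E w n : 0 < opnorm (Mn E w n).
Proof. pose proof (Mn_ge1 E w n). lra. Qed.

Lemma ln_Mn_bound E w K n : 0 < K -> (forall m, Rabs (E - w m) + 2 <= K) ->
  ln (opnorm (Mn E w n)) <= INR n * ln K.
Proof.
  intros hK h. rewrite <- ln_pow by auto. apply ln_le'. apply opnorm_pos.
  apply Mn_bound; auto; lra.
Qed.

Lemma Fn_bounds E w K n : 0 < K -> (forall m, Rabs (E - w m) + 2 <= K) -> (1 <= n)%nat ->
  0 <= Fn n w E <= ln K.
Proof.
  intros hK h hn. unfold Fn. assert (0 < INR n) by (apply lt_0_INR; lia).
  pose proof (ln_opnorm_ge0 E w n). pose proof (ln_Mn_bound E w K n hK h).
  split. apply Rmult_le_pos; auto. left; apply Rinv_0_lt_compat; auto.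
  apply Rmult_le_reg_l with (INR n); auto. rewrite <- Rmult_assoc, Rinv_r by lra. lra.
Qed.

Lemma block_bound E w m : forall q,
  ln (opnorm (Mn E w (m * q))) <=
  rsum q (fun s => ln (opnorm (Mn E (shift (Z.of_nat (s * m)) w) m))).
Proof.
  induction q.
  - rewrite Nat.mul_0_r. simpl. unfold Rle. right. rewrite <- ln_1. f_equal.
    apply Rle_antisym. apply opnorm_mid. apply (Mn_ge1 E w 0).
  - replace (m * S q)%nat with (m * q + m)%nat by lia. rewrite Mn_add.
    change (rsum (S q) ?f) with (rsum q f + f q).
    eapply Rle_trans. apply ln_le'. rewrite <- Mn_add. apply (opnorm_pos E w (m * q + m)).
    apply opnorm_mul.
    rewrite ln_mult by apply opnorm_pos.
    replace (Z.of_nat (m*q)) with (Z.of_nat (q*m)) by (f_equal; lia). lra.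
Qed.

Lemma extend_bound E w K n N : 0 < K -> (forall m, Rabs (E - w m) + 2 <= K) -> (n <= N)%nat ->
  ln (opnorm (Mn E w n)) <= ln (opnorm (Mn E w N)) + INR (N - n) * ln K.
Proof.
  intros hK h hnN.
  assert (e : Mn E w n = mmul (Minv E (shift (Z.of_nat n) w) (N - n)) (Mn E w N)).
  { replace N with (n + (N - n))%nat at 2 by lia. rewrite Mn_add.
    rewrite mmul_assoc, Minv_Mn, mmul_id_l. auto. }
  rewrite e at 1.
  assert (h2 : forall m, Rabs (E - shift (Z.of_nat n) w m) + 2 <= K) by (intros; apply h).
  eapply Rle_trans. apply ln_le'. rewrite <- e. apply opnorm_pos. apply opnorm_mul.
  assert (0 < opnorm (Minv E (shift (Z.of_nat n) w) (N - n))).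
  { pose proof (opnorm_mul (Minv E (shift (Z.of_nat n) w) (N - n)) (Mn E w N)).
    rewrite <- e in H. pose proof (opnorm_pos E w n). pose proof (opnorm_pos E w N).
    pose proof (opnorm_ge0 (Minv E (shift (Z.of_nat n) w) (N - n))).
    destruct H2; auto. rewrite <- H2 in H. lra. }
  rewrite ln_mult by (auto; apply opnorm_pos).
  rewrite <- ln_pow by auto.
  assert (ln (opnorm (Minv E (shift (Z.of_nat n) w) (N - n))) <= ln (K ^ (N - n))).
  { apply ln_le'; auto. apply Minv_bound; auto; lra. }
  lra.
Qed.

Lemma rpow_le x m : 0 <= x -> 1 <= m -> x * x <= m * m * m -> Rpower x (2/3) <= m.
Proof.
  intros hx hm h. unfold Rpower. destruct hx as [hx|hx].
  - rewrite <- (exp_ln m) by lra. apply exp_le'.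
    assert (ln (x * x) <= ln (m * m * m)) by (apply ln_le'; auto; nra).
    rewrite !ln_mult in H by nra. lra.
  - subst. rewrite ln_0', Rmult_0_r, exp_0. auto.
Qed.

Lemma ln_growth y : 1 <= y -> ln y <= 4 * sqrt (sqrt y).
Proof.
  intros hy. set (s := sqrt (sqrt y)).
  assert (hs0 : 0 < sqrt y) by (apply sqrt_lt_R0; lra).
  assert (hs : 0 < s) by (apply sqrt_lt_R0; lra).
  assert (e : y = s * s * (s * s)).
  { unfold s. rewrite sqrt_sqrt by lra. rewrite sqrt_sqrt by lra. auto. }
  rewrite e at 1. rewrite !ln_mult by nra.
  pose proof (exp_ineq1_le (ln s)). rewrite exp_ln in H by auto. lra.
Qed.

Lemma ln_sq_small eps nn : 0 < eps -> (1 <= nn)%nat -> (64 / eps) * (64 / eps) <= INR nn ->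
  2 * (ln (INR nn + 1) * ln (INR nn + 1)) <= eps * INR nn.
Proof.
  intros he hn h.
  assert (h1 : 1 <= INR nn) by (apply (le_INR 1); auto).
  set (t := sqrt (INR nn)).
  assert (ht : t * t = INR nn) by (apply sqrt_sqrt; lra).
  assert (ht0 : 0 <= t) by apply sqrt_pos.
  assert (ht1 : 1 <= t) by nra.
  assert (hq : 64 / eps <= t).
  { apply sq_le_sqrt; auto. rewrite ht. auto. }
  assert (hq' : 64 <= eps * t).
  { unfold Rdiv in hq. apply Rmult_le_compat_l with (r := eps) in hq; [|lra].
    rewrite <- Rmult_assoc, (Rmult_comm eps 64), Rmult_assoc, Rinv_r, Rmult_1_r in hq; lra. }
  pose proof (ln_growth (INR nn + 1) ltac:(lra)).
  pose proof (ln_ge0 (INR nn + 1) ltac:(lra)).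
  set (y := INR nn + 1) in *.
  assert (hy0 : 1 <= y) by (unfold y; lra).
  assert (hy : 0 < sqrt y) by (apply sqrt_lt_R0; lra).
  assert (hsy : sqrt y <= t + 1).
  { apply sq_le_sqrt. lra. rewrite sqrt_sqrt by lra. unfold y. nra. }
  assert (hss : sqrt (sqrt y) * sqrt (sqrt y) = sqrt y) by (apply sqrt_sqrt; lra).
  assert (ln y * ln y <= 16 * sqrt y).
  { pose proof (sqrt_pos (sqrt y)). nra. }
  nra.
Qed.

Lemma ln_shift_bound z q : ln (IZR (Z.abs (z + Z.of_nat q)) + 1) <=
  ln (IZR (Z.abs z) + 1) + ln (INR q + 1).
Proof.
  assert (h0 : 0 <= IZR (Z.abs z)) by (apply IZR_le; lia).
  assert (h1 : 0 <= IZR (Z.abs (z + Z.of_nat q))) by (apply IZR_le; lia).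
  assert (h2 : 0 <= INR q) by apply pos_INR.
  assert (IZR (Z.abs (z + Z.of_nat q)) <= IZR (Z.abs z) + INR q).
  { rewrite INR_IZR_INZ, <- plus_IZR. apply IZR_le. lia. }
  rewrite <- ln_mult by lra. apply ln_le'. lra. nra.
Qed.

Lemma cube_root nn : (1 <= nn)%nat ->
  exists m, (1 <= m)%nat /\ ((m - 1) * (m - 1) * (m - 1) < nn)%nat /\ (nn <= m * (m * m))%nat.
Proof.
  induction nn; intros h. lia.
  destruct (Nat.eq_dec nn 0). subst. exists 1%nat. simpl. lia.
  destruct IHnn as [m [h1 [h2 h3]]]. lia.
  destruct (Nat.le_gt_cases (S nn) (m * (m * m))).
  - exists m. repeat split; lia.
  - exists (S m). replace (S m - 1)%nat with m by lia.
    assert (nn = m * (m*m))%nat by lia. subst. repeat split; nia.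
Qed.

Lemma rsum_ge n f c : (forall j, (j < n)%nat -> c <= f j) -> INR n * c <= rsum n f.
Proof. induction n; intros h. simpl. lra. change (rsum (S n) f) with (rsum n f + f n). rewrite S_INR.
  assert (INR n * c <= rsum n f) by (apply IHn; intros; apply h; lia).
  assert (c <= f n) by (apply h; lia). lra. Qed.

Theorem corollary5p3 (I : (R -> R) -> R) (A : R -> Prop) (kappa : R) (L : R -> R)
  (HI : prob_functional I)
  (HA : forall x, A x <-> in_support I x)
  (HA2 : exists a b, A a /\ A b /\ a <> b)
  (Hkappa : (exists a, A a /\ Rabs a = kappa - 2) /\
            (forall a, A a -> Rabs a <= kappa - 2))
  (HL : forall E, Un_cv (fun n => lyap_seq I E (S n)) (L E)) :
  exists C0 : R, 0 < C0 /\
  forall eps : R, 0 < eps < 1 ->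
  forall w : Z -> R, (forall m, A (w m)) ->
  (exists n0 : nat, forall (n : nat) (z : Z) (E : R),
     (1 <= n)%nat -> (n0 <= n)%nat ->
     Rpower (ln (IZR (Z.abs z) + 1)) (2 / 3) <= INR n ->
     -kappa <= E <= kappa ->
     Rabs (L E - / INR (n * n) *
       rsum (n * n) (fun s => Fn n (shift (z + Z.of_nat (s * n)) w) E)) < eps) ->
  exists n1 : nat,
    (forall (E : R) (n : nat) (z : Z),
       -kappa <= E <= kappa -> (1 <= n)%nat -> (n1 <= n)%nat ->
       (ln (IZR (Z.abs z) + 1)) ^ 2 <= INR n ->
       Fn n (shift z w) E <= L E + 2 * eps) /\
    (forall (n : nat) (z : Z),
       / eps * Rmax (INR n1) (2 * (ln (IZR (Z.abs z) + 1)) ^ 2) <= INR n ->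
       forall E : R, -kappa <= E <= kappa -> ~ in_spec n (Hmat (shift z w)) E ->
       forall (j k : nat) (g : nat -> R), (j < n)%nat -> (k < n)%nat ->
       green_col n (Hmat (shift z w)) E k g ->
       Rabs (g j) <=
         exp ((INR n - Rabs (INR j - INR k)) * L E + C0 * eps * INR n)
         / Rabs (det n (shiftE (Hmat (shift z w)) E))).
Proof.
  destruct Hkappa as [[a0 [ha0 ea0]] hA].
  assert (hk2 : 2 <= kappa) by (pose proof (Rabs_pos a0); lra).
  set (K := 2 * kappa).
  assert (hK : 4 <= K) by (unfold K; lra).
  assert (hlnK : 0 < ln K) by (rewrite <- ln_1; apply ln_increasing; lra).
  exists (4 * ln K + 5). split; [lra|].
  intros eps [he0 he1] w hw [n0 hyp].
  assert (hent : forall E z, -kappa <= E <= kappa -> forall m, Rabs (E - shift z w m) + 2 <= K).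
  { intros E z hE m. unfold shift. pose proof (hA _ (hw (m+z)%Z)). unfold K.
    assert (Rabs E <= kappa) by (apply Rabs_le; lra).
    pose proof (Rabs_triang E (- w (m+z)%Z)). rewrite Rabs_Ropp in H1. unfold Rminus. lra. }
  set (C1 := 2 * ln K + 2).
  destruct (INR_unbounded (Rmax (24 * C1 / eps) ((64/eps)*(64/eps)))) as [M0 hM0].
  set (M := (M0 + n0 + 2)%nat).
  assert (hMr : Rmax (24 * C1 / eps) ((64/eps)*(64/eps)) <= INR M).
  { unfold M. rewrite !plus_INR. pose proof (pos_INR n0). simpl (INR 2). lra. }
  assert (hM1 : 24 * C1 / eps <= INR M) by (eapply Rle_trans; [apply Rmax_l | exact hMr]).
  assert (hM2 : (64/eps)*(64/eps) <= INR M) by (eapply Rle_trans; [apply Rmax_r | exact hMr]).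
  assert (hMn0 : (n0 <= M)%nat) by (unfold M; lia).
  assert (hM2n : (2 <= M)%nat) by (unfold M; lia).
  set (n1 := (M * (M * M))%nat).
  assert (habsz : forall z, 0 <= ln (IZR (Z.abs z) + 1)).
  { intros z. apply ln_ge0. assert (0 <= IZR (Z.abs z)) by (apply IZR_le; lia). lra. }
  assert (hLb : forall E, -kappa <= E <= kappa -> - eps < L E /\ L E < ln K + eps).
  { intros E hE.
    assert (hr : Rpower (ln (IZR (Z.abs 0) + 1)) (2 / 3) <= INR M).
    { apply rpow_le. apply habsz. apply (le_INR 1); lia.
      replace (IZR (Z.abs 0) + 1) with 1 by (simpl; ring). rewrite ln_1.
      pose proof (pos_INR M). assert (0 <= INR M * INR M) by nra. nra. }
    pose proof (hyp M 0%Z E ltac:(lia) hMn0 hr hE) as h.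
    set (Ssum := rsum (M * M) (fun s => Fn M (shift (0 + Z.of_nat (s * M)) w) E)) in h.
    assert (hMM : 0 < INR (M * M)) by (apply lt_0_INR; nia).
    assert (hS1 : INR (M * M) * 0 <= Ssum).
    { apply rsum_ge. intros s _. apply (Fn_bounds E _ K M); auto; try lra; try lia. }
    assert (hS2 : Ssum <= INR (M * M) * ln K).
    { apply rsum_le. intros s _. apply (Fn_bounds E _ K M); auto; try lra; try lia. }
    assert (0 <= / INR (M * M) * Ssum) by (apply Rmult_le_pos; [left; apply Rinv_0_lt_compat|]; lra).
    assert (/ INR (M * M) * Ssum <= ln K).
    { apply Rmult_le_reg_l with (INR (M*M)); auto. rewrite <- Rmult_assoc, Rinv_r by lra. lra. }
    apply Rabs_def2 in h. lra. }
  assert (P1 : forall E nn z, -kappa <= E <= kappa -> (1 <= nn)%nat -> (n1 <= nn)%nat ->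
       (ln (IZR (Z.abs z) + 1)) ^ 2 <= INR nn -> Fn nn (shift z w) E <= L E + 2 * eps).
  { intros E nn z hE hnn hn1 hz.
    destruct (cube_root nn hnn) as [m [hm1 [hm2 hm3]]].
    assert (hmM : (M <= m)%nat).
    { destruct (Nat.le_gt_cases M m); auto. exfalso.
      assert (m * (m * m) < M * (M * M))%nat by (apply Nat.mul_lt_mono; nia). unfold n1 in hn1. lia. }
    set (x := ln (IZR (Z.abs z) + 1)) in *.
    assert (hx : 0 <= x) by apply habsz.
    assert (hr : Rpower x (2 / 3) <= INR m).
    { apply rpow_le; auto. apply (le_INR 1); lia.
      apply le_INR in hm3. rewrite !mult_INR in hm3. simpl in hz. lra. }
    pose proof (hyp m z E ltac:(lia) ltac:(lia) hr hE) as h.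
    set (Ssum := rsum (m * m) (fun s => ln (opnorm (Mn E (shift (z + Z.of_nat (s * m)) w) m)))).
    assert (hFS : rsum (m * m) (fun s => Fn m (shift (z + Z.of_nat (s * m)) w) E) = / INR m * Ssum).
    { unfold Ssum, Fn. apply rsum_scal. }
    rewrite hFS in h.
    assert (hmr : 2 <= INR m) by (apply (le_INR 2); lia).
    assert (hSlt : Ssum < INR m * INR m * INR m * (L E + eps)).
    { apply Rabs_def2 in h. destruct h as [_ h].
      assert (e : Ssum = (/ INR (m * m) * (/ INR m * Ssum)) * (INR m * INR m * INR m)).
      { rewrite mult_INR. field. lra. }
      rewrite e at 1. rewrite (Rmult_comm (INR m * INR m * INR m) (L E + eps)).
      apply Rmult_lt_compat_r. apply Rmult_lt_0_compat; [apply Rmult_lt_0_compat|]; lra. lra. }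
    pose proof (block_bound E (shift z w) m (m * m)) as hb.
    rewrite (rsum_ext _ _ (fun s => ln (opnorm (Mn E (shift (z + Z.of_nat (s * m)) w) m)))) in hb
      by (intros; rewrite shift_shift; reflexivity).
    fold Ssum in hb.
    pose proof (extend_bound E (shift z w) K nn (m * (m * m)) ltac:(lra) (hent E z hE) hm3) as hx2.
    assert (hd : (m * (m * m) - nn <= 3 * (m * m))%nat).
    { destruct m. lia. replace (S m - 1)%nat with m in hm2 by lia. nia. }
    assert (h8 : (m * (m * m) <= 8 * nn)%nat).
    { destruct m. lia. replace (S m - 1)%nat with m in hm2 by lia. nia. }
    apply le_INR in hd. apply le_INR in h8.
    rewrite minus_INR in hd, hx2 by auto.
    repeat rewrite mult_INR in hd. repeat rewrite mult_INR in h8. repeat rewrite mult_INR in hx2.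
    simpl (INR 3) in hd. simpl (INR 8) in h8.
    set (d := INR m * (INR m * INR m) - INR nn) in *.
    assert (hnr : 0 < INR nn) by (apply lt_0_INR; lia).
    destruct (hLb E hE) as [hL1 hL2].
    assert (hmM' : 24 * C1 <= eps * INR m).
    { apply le_INR in hmM. unfold Rdiv in hM1.
      apply Rmult_le_compat_l with (r := eps) in hM1; [|lra].
      rewrite (Rmult_comm (24 * C1)), <- Rmult_assoc, Rinv_r, Rmult_1_l in hM1 by lra.
      assert (eps * INR M <= eps * INR m) by (apply Rmult_le_compat_l; lra). lra. }
    assert (hd0 : 0 <= d) by (unfold d; apply le_INR in hm3; rewrite !mult_INR in hm3; lra).
    assert (hC : d * (L E + eps + ln K) <= d * C1) by (apply Rmult_le_compat_l; unfold C1; lra).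
    assert (hm2' : 0 <= INR m * INR m) by nra.
    assert (h24 : 24 * C1 * (INR m * INR m) <= eps * INR m * (INR m * INR m))
      by (apply Rmult_le_compat_r; lra).
    assert (hC1 : 0 <= C1) by (unfold C1; lra).
    assert (hdC : d * C1 <= 3 * (INR m * INR m) * C1). apply Rmult_le_compat_r; lra.
    assert (hfin : ln (opnorm (Mn E (shift z w) nn)) <= INR nn * (L E + 2 * eps)).
    { assert (INR m * (INR m * INR m) = INR nn + d) by (unfold d; ring).
      assert (INR m * INR m * INR m * (L E + eps) = INR nn * (L E + eps) + d * (L E + eps)) by (replace (INR m * INR m * INR m) with (INR nn + d) by (unfold d; ring); ring).
      nra. }
    unfold Fn. apply Rmult_le_reg_l with (INR nn); auto.
    rewrite <- Rmult_assoc, Rinv_r, Rmult_1_l by lra. lra. }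
  exists n1. split; [exact P1|].
  intros nn z hcond E hE hspec j k g hj hk hg.
  destruct (hLb E hE) as [hL1 hL2].
  set (x := ln (IZR (Z.abs z) + 1)) in *.
  assert (hx : 0 <= x) by apply habsz.
  assert (hRm : Rmax (INR n1) (2 * x ^ 2) <= eps * INR nn).
  { apply Rmult_le_compat_l with (r := eps) in hcond; [|lra].
    rewrite <- Rmult_assoc, Rinv_r, Rmult_1_l in hcond by lra. exact hcond. }
  assert (hn1e : INR n1 <= eps * INR nn) by (eapply Rle_trans; [apply Rmax_l|exact hRm]).
  assert (hze : 2 * x ^ 2 <= eps * INR nn) by (eapply Rle_trans; [apply Rmax_r|exact hRm]).
  assert (hnn0 : 0 <= INR nn) by apply pos_INR.
  assert (hn1n : INR n1 <= INR nn).
  { assert (eps * INR nn <= 1 * INR nn) by (apply Rmult_le_compat_r; lra). lra. }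
  apply INR_le in hn1n.
  assert (hMn : (M <= nn)%nat) by (unfold n1 in hn1n; nia).
  assert (hnn1 : (1 <= nn)%nat) by lia.
  assert (hlog : 2 * (ln (INR nn + 1) * ln (INR nn + 1)) <= eps * INR nn).
  { apply ln_sq_small; auto. apply le_INR in hMn. lra. }
  assert (hnr : 1 <= INR nn) by (apply (le_INR 1); lia).
  set (c := 2 * eps * INR nn * (ln K + 1)).
  assert (BB : forall q l, (q + l <= nn)%nat ->
     Rabs (p E (shift (Z.of_nat q) (shift z w)) l) <= exp (INR l * L E + c)).
  { intros q l hql. rewrite shift_shift.
    eapply Rle_trans; [apply opnorm_m11|].
    assert (hc0 : 0 <= c) by (unfold c; assert (0 <= eps * INR nn) by nra; nra).
    destruct l as [|l'].
    - eapply Rle_trans; [apply opnorm_mid|]. simpl INR. rewrite <- exp_0. apply exp_le'. lra.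
    - set (l := S l') in *.
      rewrite <- (exp_ln (opnorm (Mn E (shift (z + Z.of_nat q) w) l))) by apply opnorm_pos.
      apply exp_le'.
      assert (hlr : 1 <= INR l) by (apply (le_INR 1); unfold l; lia).
      assert (hln : INR l <= INR nn) by (apply le_INR; lia).
      destruct (Nat.le_gt_cases n1 l) as [g1|g1];
      [destruct (Rle_dec ((ln (IZR (Z.abs (z + Z.of_nat q)) + 1)) ^ 2) (INR l)) as [g2|g2]|].
      + pose proof (P1 E l (z + Z.of_nat q)%Z hE ltac:(unfold l; lia) g1 g2) as hp1.
        unfold Fn in hp1.
        apply Rmult_le_compat_l with (r := INR l) in hp1; [|lra].
        rewrite <- Rmult_assoc, Rinv_r, Rmult_1_l in hp1 by lra.
        assert (INR l * eps <= INR nn * eps) by (apply Rmult_le_compat_r; lra).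
        assert (0 <= INR nn * eps * ln K) by (apply Rmult_le_pos; [apply Rmult_le_pos|]; lra).
        unfold c. nra.
      + (* l small because of the log condition *)
        assert (hlsmall : INR l <= 2 * eps * INR nn).
        { apply Rnot_le_lt in g2.
          pose proof (ln_shift_bound z q) as hs. fold x in hs.
          assert (hq : ln (INR q + 1) <= ln (INR nn + 1)).
          { apply ln_le'. pose proof (pos_INR q); lra. apply le_INR in hql.
            rewrite plus_INR in hql. pose proof (pos_INR l). lra. }
          assert (h0 : 0 <= ln (IZR (Z.abs (z + Z.of_nat q)) + 1)) by apply habsz.
          assert (h1 : 0 <= ln (INR q + 1)) by (apply ln_ge0; pose proof (pos_INR q); lra).
          set (y := ln (IZR (Z.abs (z + Z.of_nat q)) + 1)) in *.
          set (v := ln (INR nn + 1)) in *.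
          assert (y <= x + v) by lra.
          assert (y * y <= (x + v) * (x + v)) by (apply Rmult_le_compat; lra).
          assert (0 <= (x - v) * (x - v)) by apply sqr_nn.
          replace (y ^ 2) with (y * y) in g2 by ring. replace (x ^ 2) with (x * x) in hze by ring. nra. }
        pose proof (ln_Mn_bound E _ K l ltac:(lra) (hent E (z + Z.of_nat q)%Z hE)).
        assert (INR l * (ln K - L E) <= INR l * (ln K + 1)) by (apply Rmult_le_compat_l; lra).
        assert (INR l * (ln K + 1) <= 2 * eps * INR nn * (ln K + 1)) by (apply Rmult_le_compat_r; lra).
        unfold c. nra.
      + assert (hlsmall : INR l <= 2 * eps * INR nn).
        { apply lt_INR in g1. assert (0 <= eps * INR nn) by (apply Rmult_le_pos; lra). lra. }
        pose proof (ln_Mn_bound E _ K l ltac:(lra) (hent E (z + Z.of_nat q)%Z hE)).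
        assert (INR l * (ln K - L E) <= INR l * (ln K + 1)) by (apply Rmult_le_compat_l; lra).
        assert (INR l * (ln K + 1) <= 2 * eps * INR nn * (ln K + 1)) by (apply Rmult_le_compat_r; lra).
        unfold c. nra. }
  set (w' := shift z w) in *.
  assert (hp : p E w' nn <> 0).
  { intros h0. apply hspec. apply eigen_of_zero; auto. }
  assert (hdet : Rabs (det nn (shiftE (Hmat w') E)) = Rabs (p E w' nn)).
  { rewrite det_H_p, Rabs_mult, <- RPow_abs. replace (Rabs (-1)) with 1 by (unfold Rabs; destruct (Rcase_abs (-1)); lra). rewrite pow1. ring. }
  rewrite hdet.
  assert (hD : 0 < Rabs (p E w' nn)) by (apply Rabs_pos_lt; auto).
  destruct (green_formula E w' nn k g hk hg hp j hj) as [f1 f2].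
  assert (key : Rabs (g j) * Rabs (p E w' nn) <=
      exp ((INR nn - Rabs (INR j - INR k)) * L E + (4 * ln K + 5) * eps * INR nn)).
  { assert (hfin : forall l1 l2, (l1 + l2 + 1 = INR nn - Rabs (INR j - INR k)) ->
      exp (l1 * L E + c) * exp (l2 * L E + c) <=
      exp ((INR nn - Rabs (INR j - INR k)) * L E + (4 * ln K + 5) * eps * INR nn)).
    { intros l1 l2 hl. rewrite <- exp_plus. apply exp_le'. rewrite <- hl. unfold c.
      assert (eps <= eps * INR nn) by nra. nra. }
    destruct (Nat.le_gt_cases j k) as [hjk|hjk].
    - rewrite (f1 hjk).
      pose proof (BB 0%nat j ltac:(lia)) as b1. simpl (Z.of_nat 0) in b1. rewrite shift0 in b1.
      pose proof (BB (S k) (nn - S k)%nat ltac:(lia)) as b2.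
      unfold Psi. fold w'.
      eapply Rle_trans. apply Rmult_le_compat; try apply Rabs_pos; [exact b1| exact b2].
      apply hfin. rewrite minus_INR by lia. rewrite Rabs_left1. rewrite S_INR. ring.
      apply le_INR in hjk. lra.
    - rewrite (f2 ltac:(lia)).
      pose proof (BB 0%nat k ltac:(lia)) as b1. simpl (Z.of_nat 0) in b1. rewrite shift0 in b1.
      pose proof (BB (S j) (nn - S j)%nat ltac:(lia)) as b2.
      unfold Psi. fold w'.
      eapply Rle_trans. apply Rmult_le_compat; try apply Rabs_pos; [exact b2| exact b1].
      apply hfin. rewrite minus_INR by lia. rewrite Rabs_right. rewrite S_INR. ring.
      apply lt_INR in hjk. lra. }
  unfold Rdiv. replace (Rabs (g j)) with ((Rabs (g j) * Rabs (p E w' nn)) * / Rabs (p E w' nn))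
    by (field; lra).
  apply Rmult_le_compat_r. left; apply Rinv_0_lt_compat; auto. exact key.
Qed.
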